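(* Every odd prism is cycle-extendable.
   Context: An odd prism is obtained from two disjoint odd cycles $w_0w_1\cdots w_{2k}w_0$ and $z_0z_1\cdots z_{2k}z_0$ ($k\ge1$) by adding the edges $w_iz_i$ for each $i\in\{0,\dots,2k\}$. A matching covered graph (connected, at least two vertices, every edge in a perfect matching) is cycle-extendable if for every even cycle $C$ the graph $G-V(C)$ has a perfect matching. *)

(* Defs.v *)
From mathcomp Require Import all_boot.
Set Implicit Arguments. Unset Strict Implicit. Unset Printing Implicit Defensive.

Definition is_edge (T : finType) (e : rel T) (E : {set T}) : Prop :=
  exists x y, e x y /\ E = [set x; y].

Definition perfect_matching_on (T : finType) (e : rel T) (S : {set T})
  (M : {set {set T}}) : Prop :=
  (forall E, E \in M -> is_edge e E /\ E \subset S) /\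
  (forall x, x \in S -> #|[set E in M | x \in E]| = 1).

Definition perfect_matching (T : finType) (e : rel T) (M : {set {set T}}) :=
  perfect_matching_on e [set: T] M.

Definition matching_covered (T : finType) (e : rel T) : Prop :=
  (forall x y : T, connect e x y) /\ 1 < #|T| /\
  (forall x y : T, e x y ->
     exists M, perfect_matching e M /\ [set x; y] \in M).

Definition is_cycle (T : finType) (e : rel T) (s : seq T) : Prop :=
  uniq s /\ 3 <= size s /\ path.cycle e s.

Definition is_even_cycle (T : finType) (e : rel T) (s : seq T) : Prop :=
  is_cycle e s /\ ~~ odd (size s).

Definition cycle_extendable (T : finType) (e : rel T) : Prop :=
  matching_covered e /\
  forall s : seq T, is_even_cycle e s ->
    exists M, perfect_matching_on e (~: [set x in s]) M.

(* The odd prism on vertices 'I_(2k+1) * bool: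
   (i,false) = w_i, (i,true) = z_i. *)
Definition prism_adj {k : nat} : rel ('I_(k.*2.+1) * bool) :=
  fun u v =>
    ((u.2 == v.2) &&
       ((u.1.+1 %% k.*2.+1 == v.1) || (v.1.+1 %% k.*2.+1 == u.1)))
    || ((u.1 == v.1) && (u.2 != v.2)).

Definition is_odd_prism (T : finType) (e : rel T) : Prop :=
  exists k : nat, 0 < k /\
    exists f : 'I_(k.*2.+1) * bool -> T,
      bijective f /\ forall u v, e (f u) (f v) = prism_adj (k:=k) u v.

(* Main.v *)
Require Import Defs.
From mathcomp Require Import all_boot zify.
Set Implicit Arguments. Unset Strict Implicit. Unset Printing Implicit Defensive.

Lemma ordSS_neq (n : nat) (j : 'I_n) : 2 < n -> ordS (ordS j) != j.
Proof.
move=> h1; have h2 := ltn_ord j.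
rewrite -(inj_eq val_inj) /= -addn1 modnDml. apply/negP => /eqP.
case: (ltnP (j.+1 + 1) n) => h3.
  rewrite modn_small //; lia.
have -> : j.+1 + 1 = (j.+1 + 1 - n) + n by lia.
rewrite modnDr modn_small; lia.
Qed.

Lemma ordS_neq (n : nat) (j : 'I_n) : 1 < n -> ordS j != j.
Proof.
move=> h1; have h2 := ltn_ord j.
rewrite -(inj_eq val_inj) /=. apply/negP => /eqP.
case: (ltnP (j.+1) n) => h3.
  rewrite modn_small //; lia.
have -> : j.+1 = (j.+1 - n) + n by lia.
rewrite modnDr modn_small; lia.
Qed.

Lemma iter_ordS_surj (n : nat) (i j : 'I_n) : exists m, iter m (@ordS n) i = j.
Proof.
have Hv : forall m, val (iter m (@ordS n) i) = (i + m) %% n.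
  elim=> [|m IH] /=; first by rewrite addn0 modn_small.
  by rewrite IH -addn1 modnDml -addnA addn1 addnS.
exists (j + n - i); apply: val_inj; rewrite Hv.
have h1 := ltn_ord i; have h2 := ltn_ord j.
have -> : i + (j + n - i) = j + n by lia. by rewrite modnDr modn_small.
Qed.

Lemma next_neq_prev (T : eqType) (s : seq T) x : uniq s -> 3 <= size s -> x \in s -> next s x != prev s x.
Proof.
move=> us ss xs; case: (rot_to xs) => i p Hrot.
rewrite -(next_rot i us) -(prev_rot i us) Hrot.
have : uniq (x :: p) by rewrite -Hrot rot_uniq.
have : 3 <= size (x :: p) by rewrite -Hrot size_rot.
case: p {Hrot} => [|a [|b t]] // _ u.
apply/eqP => H.
have := next_prev u x. rewrite -H.
have ax : (a == x) = false.
  by apply/negbTE; move: u; rewrite /= inE; case: eqVneq => // ->; rewrite eqxx.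
rewrite /= eqxx /= ax eqxx => bx.
move: u; rewrite bx /= !inE eqxx /= orbT //.
Qed.

Lemma prism_adj_sym k : symmetric (@prism_adj k).
Proof.
move=> u v; rewrite /prism_adj; rewrite (eq_sym u.2) (eq_sym u.1) (orbC (_ %% _ == _)).
by [].
Qed.

Lemma prism_nbr k (j : 'I_(k.*2.+1)) b w :
  prism_adj (j, b) w = [|| w == (ordS j, b), w == (ord_pred j, b) | w == (j, ~~ b)].
Proof.
case: w => j' b'; rewrite /prism_adj /= !xpair_eqE.
have E1 : (j.+1 %% k.*2.+1 == j') = (j' == ordS j) by rewrite eq_sym.
have E2 : (j'.+1 %% k.*2.+1 == j) = (j' == ord_pred j).
  by rewrite -(inj_eq (@ordS_inj _)) ord_predK.
rewrite E1 E2 (eq_sym j).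
by case: b; case: b'; case: (j' == ordS j); case: (j' == ord_pred j); case: (j' == j).
Qed.

Lemma prism_core (k : nat) (s : seq ('I_(k.*2.+1) * bool)) : 0 < k -> uniq s -> 3 <= size s ->
  cycle (@prism_adj k) s -> ~~ odd (size s) -> forall j, ((j,false) \in s) = ((j,true) \in s).
Proof.
move=> k0 us ss cs ev.
set n := k.*2.+1.
have n3 : 2 < n by rewrite /n -addnn; lia.
pose ce u v := [&& u \in s, v \in s & (next s u == v) || (next s v == u)].
have ce_sym u v : ce u v = ce v u by rewrite /ce andbCA orbC.
have ce_spec u w : ce u w = (u \in s) && ((w == next s u) || (w == prev s u)).
  rewrite /ce; case us': (u \in s) => //=.
  have [->|nw] := eqVneq w (next s u); first by rewrite mem_next us'.
  rewrite /=.
  have [->|pw] := eqVneq w (prev s u); first by rewrite mem_prev us' next_prev // eqxx.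
  apply/negbTE; apply/andP => -[_ /eqP H]; apply: (negP pw).
  by rewrite -H prev_next.
have deg j b : ce (j,b) (ordS j, b) + ce (j,b) (ord_pred j, b) + ce (j,b) (j, ~~b)
    = ((j,b) \in s).*2.
  case vs: ((j,b) \in s); last by rewrite !ce_spec vs.
  rewrite !ce_spec vs /=.
  set a := next s (j,b); set c := prev s (j,b).
  have ac : a != c by apply: next_neq_prev.
  have aN : prism_adj (j,b) a by apply: next_cycle.
  have cN : prism_adj (j,b) c by rewrite prism_adj_sym; apply: prev_cycle.
  rewrite !prism_nbr in aN cN.
  have d1 : (ordS j, b) != (ord_pred j, b).
    rewrite xpair_eqE eqxx andbT -(inj_eq (@ordS_inj _)) ord_predK.
    exact: ordSS_neq.
  have d2 : (ordS j, b) != (j, ~~ b) by rewrite xpair_eqE; case: (b); rewrite andbF.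
  have d3 : (ord_pred j, b) != (j, ~~ b) by rewrite xpair_eqE; case: (b); rewrite andbF.
  have e1 := negbTE d1; have e2 := negbTE d2; have e3 := negbTE d3.
  have e1' : ((ord_pred j,b) == (ordS j,b)) = false by rewrite eq_sym.
  have e2' : ((j, ~~ b) == (ordS j,b)) = false by rewrite eq_sym.
  have e3' : ((j, ~~ b) == (ord_pred j,b)) = false by rewrite eq_sym.
  case/or3P: aN => /eqP Ha; case/or3P: cN => /eqP Hc; rewrite Ha Hc in ac *;
  rewrite ?eqxx ?e1 ?e1' ?e2 ?e2' ?e3 ?e3' // in ac *.
move=> i.
pose x j := ce (j,true) (ordS j,true).
pose y j := ce (j,false) (ordS j,false).
pose r j := ce (j,false) (j,true).
have D0 j : y j + y (ord_pred j) + r j = ((j,false) \in s).*2.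
  by rewrite -deg /y /r (ce_sym (ord_pred j, false)) ord_predK.
have D1 j : x j + x (ord_pred j) + r j = ((j,true) \in s).*2.
  rewrite -deg /x /r (ce_sym (ord_pred j, true)) ord_predK.
  by rewrite (ce_sym (j,true) (j, ~~ true)).
have [//|Hi] := eqVneq ((i,false) \in s) ((i,true) \in s).
have Qi : y i != x i.
  move: (D0 i) (D1 i) Hi.
  case: (y i); case: (x i); case: (y (ord_pred i)); case: (x (ord_pred i)); case: (r i);
  case: ((i,false) \in s); case: ((i,true) \in s) => //.
have Qstep j : y j != x j -> y (ordS j) != x (ordS j).
  move: (D0 (ordS j)) (D1 (ordS j)); rewrite ordSK.
  case: (y j); case: (x j); case: (y (ordS j)); case: (x (ordS j)); case: (r (ordS j));
  case: ((ordS j,false) \in s); case: ((ordS j,true) \in s) => //.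
have Q j : y j = ~~ x j.
  have [m <-] := iter_ordS_surj i j.
  suff : y (iter m (@ordS _) i) != x (iter m (@ordS _) i) by case: (y _); case: (x _).
  by elim: m => [|m IH] //=; apply: Qstep.
exfalso; move: ev; apply/negP; rewrite negbK.
have Hsz : size s = \sum_(j < n) (((j,false) \in s) + ((j,true) \in s)).
  rewrite -(card_uniqP us) -sum1_card big_mkcond /=.
  transitivity (\sum_(p : 'I_n * bool) (if (p.1,p.2) \in s then 1 else 0)).
    by apply: eq_bigr => -[].
  rewrite -(pair_bigA _ (fun j b => if (j,b) \in s then 1 else 0)) /=; apply: eq_bigr => j _; rewrite big_bool /=.
  by case: ((j,true) \in s); case: ((j,false) \in s).
have Hp j : ((j,false) \in s) + ((j,true) \in s) = 1 + (x j != x (ord_pred j)).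
  move: (D0 j) (D1 j); rewrite !Q.
  by case: (x j); case: (x (ord_pred j)); case: (r j); case: ((j,false) \in s); case: ((j,true) \in s).
have Hpar : \sum_(j < n) (x j != x (ord_pred j) : nat) + 2 * \sum_(j < n) (x j && x (ord_pred j) : nat)
    = 2 * \sum_(j < n) (x j : nat).
  rewrite big_distrr /= -big_split /= [in RHS]mul2n -addnn.
  have R : \sum_(j < n) (x j : nat) = \sum_(j < n) (x (ord_pred j) : nat).
    exact: (reindex_inj (@ord_pred_inj _)).
  rewrite {2}R -big_split /=.
  by apply: eq_bigr => j _; case: (x j); case: (x (ord_pred j)).
have Hodd : odd (\sum_(j < n) (x j != x (ord_pred j) : nat)) = false.
  have := congr1 odd Hpar; rewrite oddD !oddM /= addbF => ->; by [].
rewrite Hsz (eq_bigr _ (fun j _ => Hp j)) big_split /= oddD Hodd addbF.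
rewrite sum_nat_const card_ord muln1 /n /= odd_double //.
Qed.

Lemma pm_partner (V T : finType) (e : rel T) (adj : rel V) (f : V -> T) (p : V -> V)
  (X : {set T}) (S : {set V}) :
  bijective f -> (forall u v, e (f u) (f v) = adj u v) ->
  (forall v, (f v \in X) = (v \in S)) ->
  (forall v, v \in S -> [/\ p v \in S, p (p v) = v & adj v (p v)]) ->
  perfect_matching_on e X [set [set f v; f (p v)] | v in S].
Proof.
move=> fb He HX Hp; have [g fg gf] := fb; have fi := bij_inj fb.
split.
  move=> E /imsetP [v vS ->]; have [pS ppv a] := Hp v vS; split.
    by exists (f v), (f (p v)); rewrite He.
  by apply/subsetP => z; rewrite !inE => /orP [] /eqP ->; rewrite HX.
move=> z zX; rewrite -(gf z) in zX *; set w := g z; rewrite HX in zX.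
have [pS ppw a] := Hp w zX.
set M := [set [set f v; f (p v)] | v in S].
rewrite (_ : [set E in M | f w \in E] = [set [set f w; f (p w)]]) ?cards1 //.
apply/setP => E; rewrite !inE; apply/andP/eqP.
  case=> /imsetP [v vS ->] /set2P [] /fi eq; first by rewrite eq.
  by rewrite eq; have [_ -> _] := Hp v vS; rewrite setUC.
by move=> ->; split; [apply/imsetP; exists w | rewrite set21].
Qed.

Theorem proposition4p3 (T : finType) (e : rel T) :
  is_odd_prism e -> cycle_extendable e.
Proof.
move=> [k [k0 [f [fb He]]]]; have [g fg gf] := fb; have fi := bij_inj fb.
have n3 : 2 < k.*2.+1 by rewrite -addnn; lia.
have esym : symmetric e.
  by move=> x y; rewrite -(gf x) -(gf y) !He prism_adj_sym.
pose flip (v : 'I_(k.*2.+1) * bool) := (v.1, ~~ v.2).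
have rungM : exists M, perfect_matching e M /\
    forall j b, [set f (j,b); f (j, ~~ b)] \in M.
  exists [set [set f v; f (flip v)] | v in [set: 'I_(k.*2.+1) * bool]]; split.
    apply: pm_partner => //; first by move=> v; rewrite !inE.
    move=> [j b] _; rewrite /flip /= negbK inE; split => //.
    by rewrite prism_nbr eqxx !orbT.
  by move=> j b; apply/imsetP; exists (j,b); rewrite ?inE.
have horM : forall j b, exists M, perfect_matching e M /\
    [set f (j,b); f (ordS j, b)] \in M.
  move=> j b.
  pose p (w : 'I_(k.*2.+1) * bool) :=
    if w.1 == j then (ordS j, w.2) else if w.1 == ordS j then (j, w.2) else (w.1, ~~ w.2).
  have Sj : (ordS j == j) = false by apply/negbTE/ordS_neq; lia.
  exists [set [set f v; f (p v)] | v in [set: 'I_(k.*2.+1) * bool]]; split.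
    apply: pm_partner => //; first by move=> v; rewrite !inE.
    move=> [j' c] _; rewrite inE; split => //; rewrite /p /=.
      have [->|h1] := eqVneq j' j; first by rewrite /= Sj eqxx.
      have [->|h2] := eqVneq j' (ordS j); first by rewrite /= eqxx.
      by rewrite /= (negbTE h1) (negbTE h2) negbK.
    have [->|h1] := eqVneq j' j; first by rewrite prism_nbr eqxx.
    have [->|h2] := eqVneq j' (ordS j); first by rewrite prism_nbr ordSK eqxx orbT.
    by rewrite prism_nbr eqxx !orbT.
  by apply/imsetP; exists (j,b); rewrite ?inE // /p /= eqxx.
split; [split; [|split]|].
- have C0 : forall v, connect e (f v) (f (ord0, false)).
    have Cj : forall m (hm : m < k.*2.+1), connect e (f (Ordinal hm, false)) (f (ord0,false)).
      elim=> [|m IH] hm.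
        by rewrite (_ : Ordinal hm = ord0) ?connect0 //; apply: val_inj.
      apply: connect_trans (IH (ltnW hm)); apply: connect1.
      by rewrite He /prism_adj /= (modn_small hm) eqxx !orbT.
    move=> [[m hm] b]; case: b; last exact: Cj.
    apply: connect_trans (Cj m hm); apply: connect1.
    by rewrite He prism_nbr eqxx !orbT.
  move=> x y; rewrite -(gf x) -(gf y).
  apply: connect_trans (C0 _) _; rewrite (sym_connect_sym esym); exact: C0.
- apply/card_gt1P; exists (f (ord0,false)), (f (ord0,true)); split => //.
  by rewrite (inj_eq fi).
- move=> x y; rewrite -(gf x) -(gf y) He; case: (g x) => j b.
  rewrite prism_nbr => /or3P [] /eqP ->.
  + have [M [HM HE]] := horM j b; by exists M.
  + have [M [HM HE]] := horM (ord_pred j) b; exists M; split => //.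
    by rewrite setUC -{2}(ord_predK j).
  + have [M [HM HE]] := rungM; by exists M.
- move=> s [[us [ss cs]] ev].
  have memb : forall v, (v \in map g s) = (f v \in s).
    by move=> v; rewrite -{1}(fg v) (mem_map (can_inj gf)).
  have core := @prism_core k (map g s) k0.
  rewrite map_inj_uniq ?size_map in core; last exact: can_inj gf.
  have cs' : cycle (@prism_adj k) (map g s).
    rewrite cycle_map; rewrite -(eq_cycle (e := e)) //.
    by move=> x y /=; rewrite -He !gf.
  have {}core := core us ss cs' ev.
  exists [set [set f v; f (flip v)] | v in [set v | f v \notin s]].
  apply: pm_partner => //; first by move=> v; rewrite !inE.
  move=> [j b]; rewrite !inE /flip /= negbK => H; split => //; last by rewrite prism_nbr eqxx !orbT.
  by move: H; rewrite -!memb; case: b => /=; rewrite core.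
Qed.
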